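(* Let $X$ be a homogeneous space with the Baire property and $\chi(X)\le\aleph_0$. If there is a continuous transitive action of an $\omega$-narrow group on $X$, then $X$ is separable and metrizable.
   Context: All spaces are Tychonoff. $X$ is homogeneous if for any $x,y\in X$ there is a homeomorphism $h$ of $X$ with $h(x)=y$. A topological group $G$ is $\omega$-narrow if for every neighborhood $U$ of the unit there is a countable $A\subset G$ with $AU=G$. *)

(* Defs.v *)
From HB Require Import structures.
From mathcomp Require Import all_boot all_order all_algebra.
From mathcomp Require Import all_classical all_reals all_analysis.
From mathcomp Require Import Rstruct Rstruct_topology.
From Stdlib Require Import Rdefinitions.

Set Implicit Arguments.
Unset Strict Implicit.
Unset Printing Implicit Defensive.
Import Order.TTheory GRing.Theory Num.Theory.

Local Open Scope classical_set_scope.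
Local Open Scope ring_scope.

Definition tychonoff_space (X : topologicalType) : Prop :=
  accessible_space X /\
  forall (x : X) (B : set X), closed B -> ~ B x ->
    exists f : X -> Rdefinitions.R,
      continuous f /\ f x = 0 /\ (forall y, B y -> f y = 1).

Definition homeomorphism (X : topologicalType) (h : X -> X) : Prop :=
  exists g : X -> X, [/\ cancel h g, cancel g h, continuous h & continuous g].

Definition homogeneous (X : topologicalType) : Prop :=
  forall x y : X, exists h : X -> X, homeomorphism h /\ h x = y.

Definition baire_property (X : topologicalType) : Prop :=
  forall F : nat -> set X, (forall n, open (F n) /\ dense (F n)) ->
    dense (\bigcap_n F n).

Definition countable_character (X : topologicalType) : Prop :=
  forall x : X, exists B : set (set X),
    [/\ countable B,
        (forall b, B b -> open b /\ b x) &
        (forall U, nbhs x U -> exists2 b, B b & b `<=` U)].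

Definition separable (X : topologicalType) : Prop :=
  exists D : set X, countable D /\ dense D.

Definition metrizable (X : topologicalType) : Prop :=
  exists d : X -> X -> Rdefinitions.R,
    [/\ (forall x y, 0 <= d x y),
        (forall x y, d x y = 0 <-> x = y),
        (forall x y, d x y = d y x),
        (forall x y z, d x z <= d x y + d y z) &
        (forall U : set X, open U <->
           (forall x, U x -> exists2 eps : Rdefinitions.R, 0 < eps &
                [set y | d x y < eps] `<=` U))].

Definition topological_group (G : topologicalType)
    (mul : G -> G -> G) (inv : G -> G) (e : G) : Prop :=
  [/\ (forall x y z, mul x (mul y z) = mul (mul x y) z),
      (forall x, mul e x = x /\ mul x e = x),
      (forall x, mul (inv x) x = e /\ mul x (inv x) = e),
      continuous (fun p : G * G => mul p.1 p.2) &
      continuous inv].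

Definition omega_narrow (G : topologicalType)
    (mul : G -> G -> G) (e : G) : Prop :=
  forall U : set G, nbhs e U ->
    exists A : set G, countable A /\
      forall g : G, exists a u, [/\ A a, U u & g = mul a u].

Definition continuous_action (G X : topologicalType)
    (mul : G -> G -> G) (e : G) (act : G -> X -> X) : Prop :=
  [/\ (forall x, act e x = x),
      (forall g h x, act (mul g h) x = act g (act h x)) &
      continuous (fun p : G * X => act p.1 p.2)].

Definition transitive_action (G X : Type) (act : G -> X -> X) : Prop :=
  forall x y : X, exists g : G, act g x = y.

(* Main.v *)
Require Import Defs.
From HB Require Import structures.
From mathcomp Require Import all_boot all_order all_algebra.
From mathcomp Require Import all_classical all_reals all_analysis.
From mathcomp Require Import Rstruct Rstruct_topology.
From Stdlib Require Import Rdefinitions.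
From mathcomp Require Import lra.
Set Implicit Arguments.
Unset Strict Implicit.
Unset Printing Implicit Defensive.
Import Order.TTheory GRing.Theory Num.Theory.
Local Open Scope classical_set_scope.
Local Open Scope ring_scope.

Lemma enum_countable T (d : T) (A : set T) : countable A ->
  exists g : nat -> T, (forall n, A (g n) \/ g n = d) /\ forall a, A a -> exists n, g n = a.
Proof.
move=> /countable_injP[f finj].
exists (fun n => match pselect (exists a, A a /\ f a = n) with
  | left h => projT1 (cid h) | right _ => d end); split.
  by move=> n; case: pselect => [h|_]; [left; exact: (projT2 (cid h)).1 | right].
move=> a Aa; exists (f a).
case: pselect => [h|]; last by move=> []; exists a.
case: (cid h) => a' [Aa' fa'] /=; apply: finj; rewrite ?inE //.
Qed.

Lemma exN (c : R) : 0 < c -> exists N : nat, (N.+1%:R)^-1 < c.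
Proof.
move=> c0; exists (Num.truncn (c^-1)).
have h := truncnS_gt (c^-1).
by rewrite -[X in _ < X]invrK ltf_pV2 ?posrE ?invr_gt0.
Qed.

Lemma nbhsS (T : topologicalType) (x : T) (P Q : set T) :
  P `<=` Q -> nbhs x P -> nbhs x Q.
Proof. by move=> PQ; apply: filterS. Qed.
Lemma nbhsI (T : topologicalType) (x : T) (P Q : set T) :
  nbhs x P -> nbhs x Q -> nbhs x (P `&` Q).
Proof. exact: filterI. Qed.

Definition cap (a : R) : R := if a <= 1 then a else 1.

Lemma cap_ge0 a : 0 <= a -> 0 <= cap a.
Proof. rewrite /cap; case: ifP => h; [move: h => /idP h | move: h => /negbT; rewrite -ltNge => h]; lra. Qed.
Lemma cap_le1 a : cap a <= 1.
Proof. rewrite /cap; case: ifP => h; [move: h => /idP h | move: h => /negbT; rewrite -ltNge => h]; lra. Qed.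
Lemma cap_le a : cap a <= a.
Proof. rewrite /cap; case: ifP => h; [move: h => /idP h | move: h => /negbT; rewrite -ltNge => h]; lra. Qed.
Lemma cap_half a : 2^-1 <= a -> 2^-1 <= cap a.
Proof. rewrite /cap; case: ifP => h; [move: h => /idP h | move: h => /negbT; rewrite -ltNge => h]; lra. Qed.
Lemma cap0 : cap 0 = 0.
Proof. by rewrite /cap ler01. Qed.
Lemma cap_tri (p q r : R) : 0 <= p -> 0 <= q -> r <= p + q ->
  cap r <= cap p + cap q.
Proof.
rewrite /cap; case: (leP r 1) => hr; case: (leP p 1) => hp; case: (leP q 1) => hq; lra.
Qed.

Lemma metric_of_family (X : topologicalType) (F : nat -> X -> R) :
  accessible_space X ->
  (forall n, continuous (F n)) ->
  (forall x V, nbhs x V -> exists n, F n x < 2^-1 /\ forall y, ~ V y -> F n y = 1) ->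
  metrizable X.
Proof.
move=> acc cF sepF.
pose t n x y := (n.+1%:R)^-1 * cap `|F n x - F n y|.
pose E x y := [set r | exists n, r = t n x y].
pose d x y := sup (E x y).
have w0 n : 0 <= (n.+1%:R : R)^-1 by rewrite invr_ge0 ler0n.
have w1 n : (n.+1%:R : R)^-1 <= 1 by rewrite invf_le1 ?ltr0n // ler1n.
have t0 n x y : 0 <= t n x y by rewrite mulr_ge0 // cap_ge0.
have m1 x y n : cap `|F n x - F n y| <= 1 by exact: cap_le1.
have t1 n x y : t n x y <= 1 by rewrite mulr_ile1 // cap_ge0.
have tw n x y : t n x y <= (n.+1%:R)^-1 by rewrite ler_piMr // cap_ge0.
have tn n x y : t n x y <= `|F n x - F n y|.
  apply: le_trans (ler_piMl _ (w1 n)) _; first by rewrite cap_ge0.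
  exact: cap_le.
have hub x y : has_ubound (E x y) by exists 1 => r [n ->].
have ne x y : E x y !=set0 by exists (t 0%N x y), 0%N.
have dub n x y : t n x y <= d x y.
  have := @ub_le_sup _ (E x y) (hub x y) (t n x y). apply. by exists n.
have dle x y c : (forall n, t n x y <= c) -> d x y <= c.
  by move=> h; apply: ge_sup (ne x y) _ => r [n ->].
have tC n x y : t n x y = t n y x by rewrite /t distrC.
have sep x V : nbhs x V -> exists2 eps, 0 < eps & forall y, ~ V y -> eps <= d x y.
  move=> /sepF[n [Fx FV]]; exists ((n.+1%:R)^-1 / 2).
    by rewrite divr_gt0 // invr_gt0 ltr0n.
  move=> y /FV Fy; apply: le_trans (dub n x y); rewrite /t Fy ler_wpM2l //.
  apply: cap_half.
  by rewrite distrC; apply: le_trans (ler_norm _); lra.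
exists d; split.
- by move=> x y; exact: le_trans (t0 0%N x y) (dub 0%N x y).
- move=> x y; split; last first.
    move=> <-; apply/le_anti/andP; split; last exact: le_trans (t0 0%N x x) (dub 0%N x x).
    by apply: dle => n; rewrite /t subrr normr0 cap0 mulr0.
  move=> dxy; apply/eqP; apply/negPn/negP => /acc[A [oA xA yA]].
  have [eps e0 h] := sep x A (open_nbhs_nbhs (conj oA (set_mem xA))).
  have := h y (set_mem yA); rewrite dxy; lra.
- move=> x y; apply/le_anti/andP; split; apply: dle => n; rewrite tC; exact: dub.
- move=> x y z; apply: dle => n; apply: le_trans (lerD (dub n x y) (dub n y z)).
  rewrite /t -mulrDr ler_wpM2l // cap_tri // ?normr_ge0 //.
  exact: ler_distD.
- move=> U; split.
    move=> oU x Ux; have [eps e0 h] := sep x U (open_nbhs_nbhs (conj oU Ux)).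
    exists eps => // y /= dy; apply/not_notP => nU; have := h y nU; lra.
  move=> H; rewrite openE => x /H[eps e0 sub]; rewrite /interior.
  suff hb : nbhs x [set y | d x y < eps] by exact: nbhsS sub hb.
  have e2 : 0 < eps / 2 by lra.
  have [N hN] := exN e2.
  have key (M : nat) : nbhs x [set y | forall n : nat, leq n M -> `|F n x - F n y| < eps / 2].
    have one n : nbhs x [set y | `|F n x - F n y| < eps / 2].
      have := cF n x _ (nbhsx_ballx (F n x) (eps / 2) e2).
      by apply: nbhsS => y; rewrite /ball.
    elim: M => [|M IH].
      by apply: nbhsS (one 0%N) => y h n; rewrite leqn0 => /eqP ->.
    have IH2 := nbhsI IH (one M.+1).
    apply: (nbhsS _ IH2) => y [h1 h2] n hn.
    by case: (ltngtP n M.+1) hn => // [hl _|-> _]; [apply: h1; rewrite -ltnS|].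
  apply: nbhsS (key N) => y hy /=.
  apply: le_lt_trans (_ : eps / 2 < eps); last lra.
  apply: dle => n; case: (leqP n N) => hn.
    exact/ltW/(le_lt_trans (tn n x y))/hy.
  apply: le_trans (tw n x y) _; apply/ltW/(le_lt_trans _ hN).
  by rewrite lef_pV2 ?posrE ?ltr0n // ler_nat ltnW.
Qed.
Lemma family_of_base (X : topologicalType) (C : nat -> nat -> set X) :
  tychonoff_space X ->
  (forall k m, open (C k m)) ->
  (forall x V, nbhs x V -> exists k m, C k m x /\ C k m `<=` V) ->
  exists F : nat -> X -> R, (forall n, continuous (F n)) /\
    (forall x V, nbhs x V -> exists n, F n x < 2^-1 /\ forall y, ~ V y -> F n y = 1).
Proof.
move=> tych oC base.
pose P (p : (nat * nat) * (nat * nat)) (f : X -> R) := continuous f /\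
  (forall y, C p.1.1 p.1.2 y -> f y < 2^-1) /\ (forall y, ~ C p.2.1 p.2.2 y -> f y = 1).
pose G p : X -> R := match pselect (exists f, P p f) with
  | left h => projT1 (cid h) | right _ => fun _ => 0 end.
have GP p : (exists f, P p f) -> P p (G p).
  by rewrite /G; case: pselect => // h _; exact: projT2 (cid h).
have Gc p : continuous (G p).
  rewrite /G; case: pselect => h; [exact: (projT2 (cid h)).1 | exact: cst_continuous].
exists (fun n => match unpickle n with Some p => G p | None => fun _ => 0 end).
split.
  by move=> n; case: unpickle => [p|]; [exact: Gc | exact: cst_continuous].
move=> x V xV; have [k' [m' [Cx CV]]] := base x V xV.
have [f [cf [fx f1]]] := tych.2 x (~` C k' m') (open_closedC (oC k' m')) (fun h => h Cx).
have nh : nbhs x [set y | f y < 2^-1].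
  have hx : nbhs (f x) [set r : R | r < 2^-1].
    by apply: open_nbhs_nbhs; split; [exact: open_lt | rewrite /= fx; lra].
  exact: cf x _ hx.
have [k [m [Cx' Cs]]] := base x _ nh.
pose p := ((k, m), (k', m')).
have Pp : P p (G p).
  apply: GP; exists f; split; first done.
  by split; [move=> y /Cs | move=> y ny; apply: f1].
exists (pickle p); rewrite pickleK.
case: Pp => _ [h1 h2]; split; first exact: h1.
by move=> y nV; apply: h2 => /CV.
Qed.

Theorem corollary4p12 (X : topologicalType)
  (tychX : tychonoff_space X) (homX : homogeneous X) (baireX : baire_property X)
  (chiX : countable_character X)
  (G : topologicalType) (mul : G -> G -> G) (inv : G -> G) (e : G)
  (tychG : tychonoff_space G) (topG : topological_group mul inv e)
  (narrowG : omega_narrow mul e)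
  (act : G -> X -> X) (contact : continuous_action mul e act)
  (transact : transitive_action act) :
  separable X /\ metrizable X.
Proof.
move: topG contact => [assoc unit invax cmul cinv] [act_e act_mul cact].
have [[x0 _] | nX] := pselect (exists x : X, True); last first.
  split.
    exists set0; split; first exact: countable0.
    by move=> O [x _] _; exfalso; apply: nX; exists x.
  exists (fun _ _ => 0); split; try by move=> x; exfalso; apply: nX; exists x.
  move=> U; split => [_ x|_]; first by exfalso; apply: nX; exists x.
  have -> : U = set0 by apply/seteqP; split => x //; exfalso; apply: nX; exists x.
  exact: open0.
have inve : inv e = e.
  have h := (unit (inv e)).2; rewrite (invax e).1 in h; by rewrite -h.
have actK g y : act (inv g) (act g y) = y by rewrite -act_mul (invax g).1 act_e.
have actKV g y : act g (act (inv g) y) = y by rewrite -act_mul (invax g).2 act_e.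
have cprod g y W : nbhs (act g y) W -> exists2 P, nbhs g P &
    exists2 Q, nbhs y Q & forall h z, P h -> Q z -> W (act h z).
  move=> hW; have := cact (g, y) W hW.
  case => -[P Q] /= [hP hQ] sub; exists P => //; exists Q => // h z Ph Qz.
  exact: (sub (h, z)).
have cg g y W : nbhs (act g y) W -> nbhs y [set z | W (act g z)].
  move=> /cprod[P hP [Q hQ sub]]; apply: nbhsS hQ => z Qz.
  exact: sub (nbhs_singleton hP) Qz.
have cgo g O : open O -> open [set z | O (act g z)].
  move=> oO; rewrite openE => z Oz; rewrite /interior.
  by apply: cg; apply: open_nbhs_nbhs; split.
have [Bs [cB Bprop Bbase]] := chiX x0.
have [be [hbr hbe]] := enum_countable setT cB.
have bo n : open (be n) /\ be n x0.
  by case: (hbr n) => [/Bprop // | ->]; split; [exact: openT | done].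
have bb U : nbhs x0 U -> exists n, be n `<=` U.
  by move=> /Bbase[b Bb bU]; have [n hn] := hbe b Bb; exists n; rewrite hn.
have step k : exists p : nat * (nat -> G), forall g, exists m u,
    [/\ g = mul (p.2 m) u, be p.1 (act u x0) &
       forall y, be p.1 y -> be k (act (inv u) y)].
  have hk : nbhs (act e x0) (be k) by rewrite act_e; apply: open_nbhs_nbhs; exact: bo.
  have [P hP [Q hQ sub]] := cprod e x0 _ hk.
  have [nk hnk] := bb Q hQ.
  have hP' : nbhs (inv e) P by rewrite inve.
  have hN : nbhs e [set h | P (inv h)] := cinv e P hP'.
  have hk' : nbhs (act e x0) (be nk) by rewrite act_e; apply: open_nbhs_nbhs; exact: bo.
  have hU : nbhs e [set u | be nk (act u x0)].
    have [P' hP2 [Q' hQ' sub']] := cprod e x0 _ hk'.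
    by apply: nbhsS hP2 => u P'u; apply: sub' P'u (nbhs_singleton hQ').
  have [A [cA hA]] := narrowG _ (nbhsI hN hU).
  have [al [_ hal]] := enum_countable e cA.
  exists (nk, al) => g; have [a [u [Aa [Nu Uu] ->]]] := hA g.
  have [m <-] := hal a Aa; exists m, u; split => // y hy.
  exact: sub Nu (hnk y hy).
have [f hf] := choice step.
pose C k m y := be (f k).1 (act (inv ((f k).2 m)) y).
have oC k m : open (C k m) by apply: cgo; exact: (bo _).1.
have base x V : nbhs x V -> exists k m, C k m x /\ C k m `<=` V.
  move=> hV; have [g hg] := transact x0 x.
  have hV' : nbhs (act g x0) V by rewrite hg.
  have [k hk] := bb _ (cg g x0 V hV').
  have [m [u [gE hu hN]]] := hf k g.
  exists k, m; split.
    by rewrite /C -hg gE act_mul actK.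
  move=> y hy; have := hk _ (hN _ hy); rewrite /= gE !act_mul.
  by rewrite !actKV.
split.
  exists ((fun p : nat * nat => act ((f p.1).2 p.2) x0) @` setT); split.
    exact: sub_countable (card_image_le _ _) (countableP _).
  move=> O [x Ox] oO.
  have [k [m [Cx CO]]] := base x O (open_nbhs_nbhs (conj oO Ox)).
  exists (act ((f k).2 m) x0); split; last by exists (k, m).
  by apply: CO; rewrite /C actK; exact: (bo _).2.
have [F [cF sF]] := family_of_base tychX oC base.
exact: metric_of_family tychX.1 cF sF.
Qed.
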